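(* Let $z,x,y\in[0,1]$ satisfy $z=x+y$, and write their concise binary expansions as $z=(z_0.z_1z_2\ldots)_2$, $x=(x_0.x_1x_2\ldots)_2$, $y=(y_0.y_1y_2\ldots)_2$. Suppose $\ell\ge 0$ is an index such that $z_\ell=1$ and $z_j=0$ for all $j>\ell$. Then the sequence of bit pairs $(x_j,y_j)_{j\ge \ell}$ satisfies exactly one of the following three patterns: (1) $(x_\ell,y_\ell)\in\{(0,1),(1,0)\}$ and $(x_j,y_j)=(0,0)$ for all $j>\ell$; (2) $(x_\ell,y_\ell)\in\{(0,0),(1,1)\}$, and there is an integer $k\ge 0$ such that $(x_j,y_j)\in\{(0,1),(1,0)\}$ for $\ell<j\le \ell+k$, $(x_{\ell+k+1},y_{\ell+k+1})=(1,1)$, and $(x_j,y_j)=(0,0)$ for all $j>\ell+k+1$; (3) $(x_\ell,y_\ell)\in\{(0,0),(1,1)\}$ and $(x_j,y_j)\in\{(0,1),(1,0)\}$ for all $j>\ell$.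
   Context: A concise binary expansion of a real number is a binary representation $(z_0.z_1z_2\ldots)_2=\sum_{i\ge0} z_i2^{-i}$ with $z_i\in\{0,1\}$ that does not end in an infinite string of 1s. *)

(* Defs.v *)
From Stdlib Require Import Reals.
Open Scope R_scope.

Definition bitR (b : bool) : R := if b then 1 else 0.

Definition concise_expansion (b : nat -> bool) (r : R) : Prop :=
  infinite_sum (fun i => bitR (b i) / 2 ^ i) r /\
  ~ (exists N : nat, forall j : nat, (N <= j)%nat -> b j = true).

Definition pair_01_10 (xb yb : nat -> bool) (j : nat) : Prop :=
  (xb j = false /\ yb j = true) \/ (xb j = true /\ yb j = false).
Definition pair_00_11 (xb yb : nat -> bool) (j : nat) : Prop :=
  (xb j = false /\ yb j = false) \/ (xb j = true /\ yb j = true).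
Definition pair_00 (xb yb : nat -> bool) (j : nat) : Prop :=
  xb j = false /\ yb j = false.
Definition pair_11 (xb yb : nat -> bool) (j : nat) : Prop :=
  xb j = true /\ yb j = true.

Definition pattern1 (xb yb : nat -> bool) (l : nat) : Prop :=
  pair_01_10 xb yb l /\ (forall j, (l < j)%nat -> pair_00 xb yb j).

Definition pattern2 (xb yb : nat -> bool) (l : nat) : Prop :=
  pair_00_11 xb yb l /\
  exists k : nat,
    (forall j, (l < j)%nat -> (j <= l + k)%nat -> pair_01_10 xb yb j) /\
    pair_11 xb yb (l + k + 1)%nat /\
    (forall j, (l + k + 1 < j)%nat -> pair_00 xb yb j).

Definition pattern3 (xb yb : nat -> bool) (l : nat) : Prop :=
  pair_00_11 xb yb l /\ (forall j, (l < j)%nat -> pair_01_10 xb yb j).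

(* Main.v *)
Require Import Defs.
From Stdlib Require Import Reals Lra Lia Classical.
Open Scope R_scope.

Definition Ssum (b : nat -> bool) (m : nat) : R :=
  sum_f_R0 (fun i => bitR (b i) / 2 ^ i) m.

Fixpoint P (b : nat -> bool) (n : nat) : nat :=
  match n with O => Nat.b2n (b O) | S k => (2 * P b k + Nat.b2n (b (S k)))%nat end.

Lemma bitR_b2n c : bitR c = INR (Nat.b2n c).
Proof. destruct c; simpl; reflexivity. Qed.

Lemma bitR_01 c : 0 <= bitR c <= 1.
Proof. destruct c; simpl; lra. Qed.

Lemma Ssum_S b m : Ssum b (S m) = Ssum b m + bitR (b (S m)) / 2 ^ (S m).
Proof. reflexivity. Qed.

Lemma P_Ssum b n : INR (P b n) = 2 ^ n * Ssum b n.
Proof.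
  induction n.
  - unfold Ssum. simpl. rewrite <- bitR_b2n. field.
  - change (P b (S n)) with (2 * P b n + Nat.b2n (b (S n)))%nat.
    rewrite plus_INR, mult_INR, IHn, <- bitR_b2n, Ssum_S.
    simpl INR. simpl pow.
    field. apply pow_nonzero. lra.
Qed.



Lemma pow2_pos m : 0 < 2 ^ m.
Proof. apply pow_lt. lra. Qed.

Lemma inv_pow_S m : / 2 ^ (S m) = / 2 ^ m / 2.
Proof. simpl. field. apply pow_nonzero. lra. Qed.

Lemma Ssum_mono b n d :
  Ssum b n <= Ssum b (n + d) <= Ssum b n + / 2 ^ n - / 2 ^ (n + d).
Proof.
  induction d.
  - rewrite Nat.add_0_r. lra.
  - rewrite Nat.add_succ_r, Ssum_S.
    pose proof (bitR_01 (b (S (n + d)))).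
    pose proof (pow2_pos (S (n+d))).
    assert (0 <= bitR (b (S (n + d))) / 2 ^ S (n + d) <= / 2 ^ S (n+d)).
    { split. apply Rmult_le_pos; [lra| left; apply Rinv_0_lt_compat; lra].
      unfold Rdiv. rewrite <- (Rmult_1_l (/ 2 ^ S (n+d))) at 2.
      apply Rmult_le_compat_r; [left; apply Rinv_0_lt_compat; lra| lra]. }
    rewrite inv_pow_S in *. lra.
Qed.

Lemma Ssum_gap b n j d : b (S (n + j)) = false -> (j <= d)%nat ->
  Ssum b (S (n + d)) <= Ssum b n + / 2 ^ n - / 2 ^ (S (n + d)) - / 2 ^ (S (n + j)).
Proof.
  intros Hb Hjd.
  destruct (Ssum_mono b (S (n + j)) (d - j)) as [_ H1].
  replace (S (n + j) + (d - j))%nat with (S (n + d)) in H1 by lia.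
  destruct (Ssum_mono b n j) as [_ H2].
  rewrite (Ssum_S b (n + j)), Hb in H1. simpl bitR in H1.
  unfold Rdiv in H1. rewrite Rmult_0_l in H1. rewrite !inv_pow_S in *. lra.
Qed.

Lemma cv_le (u : nat -> R) l c N : Un_cv u l -> (forall m, (N <= m)%nat -> u m <= c) -> l <= c.
Proof.
  intros Hu Hc. destruct (Rle_dec l c) as [h|h]; auto. exfalso.
  destruct (Hu (l - c)) as [N0 HN0]; [lra|].
  specialize (HN0 (max N N0) (Nat.le_max_r _ _)).
  specialize (Hc (max N N0) (Nat.le_max_l _ _)).
  unfold Rdist in HN0. apply Rabs_def2 in HN0. lra.
Qed.

Lemma cv_ge (u : nat -> R) l c N : Un_cv u l -> (forall m, (N <= m)%nat -> c <= u m) -> c <= l.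
Proof.
  intros Hu Hc. destruct (Rle_dec c l) as [h|h]; auto. exfalso.
  destruct (Hu (c - l)) as [N0 HN0]; [lra|].
  specialize (HN0 (max N N0) (Nat.le_max_r _ _)).
  specialize (Hc (max N N0) (Nat.le_max_l _ _)).
  unfold Rdist in HN0. apply Rabs_def2 in HN0. lra.
Qed.

Lemma floor_lemma b r : concise_expansion b r -> forall n,
  INR (P b n) <= 2 ^ n * r < INR (P b n) + 1.
Proof.
  intros [Hs Hc] n.
  assert (Hj : exists j, b (S (n + j)) = false).
  { apply NNPP. intro Hn. apply Hc. exists (S n). intros j Hj.
    destruct (b j) eqn:E; auto. exfalso. apply Hn. exists (j - S n)%nat.
    replace (S (n + (j - S n))) with j by lia. exact E. }
  destruct Hj as [j Hj].
  assert (Hu : Un_cv (Ssum b) r) by exact Hs.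
  rewrite P_Ssum. pose proof (pow2_pos n).
  split.
  - apply Rmult_le_compat_l; [lra|].
    apply (cv_ge _ _ _ n Hu). intros m Hm.
    destruct (Ssum_mono b n (m - n)) as [Hq _].
    replace (n + (m - n))%nat with m in Hq by lia. exact Hq.
  - assert (r <= Ssum b n + / 2 ^ n - / 2 ^ (S (n + j))).
    { apply (cv_le _ _ _ (S (n + j)) Hu). intros m Hm.
      pose proof (Ssum_gap b n j (m - 1 - n) Hj ltac:(lia)).
      replace (S (n + (m - 1 - n))) with m in H0 by lia.
      pose proof (pow2_pos m). pose proof (Rinv_0_lt_compat _ H1). lra. }
    pose proof (pow2_pos (S (n + j))). pose proof (Rinv_0_lt_compat _ H1).
    assert (2 ^ n * r <= 2 ^ n * (Ssum b n + / 2 ^ n - / 2 ^ S (n + j))).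
    { apply Rmult_le_compat_l; lra. }
    assert (2 ^ n * (Ssum b n + / 2 ^ n - / 2 ^ S (n + j)) =
            2 ^ n * Ssum b n + 1 - 2 ^ n * / 2 ^ S (n + j)) by (field; lra).
    assert (0 < 2 ^ n * / 2 ^ S (n + j)) by (apply Rmult_lt_0_compat; lra).
    lra.
Qed.

Lemma least_ex (Q : nat -> Prop) : (exists n, Q n) -> exists n, Q n /\ forall m, (m < n)%nat -> ~ Q m.
Proof.
  intros [n Hn]. induction n as [n IH] using (well_founded_induction Wf_nat.lt_wf).
  destruct (classic (exists m, (m < n)%nat /\ Q m)) as [[m [Hm Qm]]|H].
  - exact (IH m Hm Qm).
  - exists n. split; auto. intros m Hm Qm. apply H. eauto.
Qed.

Section Comb.
End Comb.

Lemma comb (A B C : nat -> nat) (xb yb : nat -> bool) (l : nat) :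
  (forall n, A (S n) = 2 * A n + Nat.b2n (xb (S n)))%nat ->
  (forall n, B (S n) = 2 * B n + Nat.b2n (yb (S n)))%nat ->
  (forall n, (l <= n)%nat -> C (S n) = 2 * C n)%nat ->
  (forall n, A n + B n <= C n <= A n + B n + 1)%nat ->
  (exists a, A l = 2 * a + Nat.b2n (xb l))%nat ->
  (exists a, B l = 2 * a + Nat.b2n (yb l))%nat ->
  (exists c, C l = 2 * c + 1)%nat ->
  pattern1 xb yb l \/ pattern2 xb yb l \/ pattern3 xb yb l.
Proof.
  intros HA HB HC Hb [a Ha] [b Hb'] [c Hc].
  assert (Z0 : forall n, (l <= n)%nat -> C n = (A n + B n)%nat ->
            forall d, C (n + d)%nat = (A (n + d) + B (n + d))%nat /\
                      (forall e, (0 < e <= d)%nat -> pair_00 xb yb (n + e))).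
  { intros n Hn H0 d. induction d as [|d [IH1 IH2]].
    - rewrite Nat.add_0_r. split; auto. intros; lia.
    - rewrite Nat.add_succ_r.
      pose proof (HA (n + d)%nat). pose proof (HB (n + d)%nat).
      pose proof (HC (n + d)%nat ltac:(lia)). pose proof (Hb (S (n + d))).
      assert (Hxy : xb (S (n + d)) = false /\ yb (S (n + d)) = false).
      { destruct (xb (S (n + d))), (yb (S (n + d))); simpl in *; split; auto; lia. }
      split. { destruct Hxy as [E1 E2]. rewrite E1, E2 in *. simpl in *. lia. }
      intros e He. destruct (Nat.eq_dec e (S d)).
      + subst. rewrite Nat.add_succ_r. exact Hxy.
      + apply IH2. lia. }
  pose proof (Hb l) as Hbl.
  assert (Hcase : C l = (A l + B l)%nat \/ C l = (A l + B l + 1)%nat) by lia.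
  destruct Hcase as [H0|H1].
  - left. split.
    + unfold pair_01_10. destruct (xb l), (yb l); simpl in *; auto; lia.
    + intros j Hj. destruct (Z0 l (le_n _) H0 (j - l)%nat) as [_ Hz].
      specialize (Hz (j - l)%nat ltac:(lia)). replace (l + (j - l))%nat with j in Hz by lia. exact Hz.
  - assert (Hl : pair_00_11 xb yb l).
    { unfold pair_00_11. destruct (xb l), (yb l); simpl in *; auto; lia. }
    destruct (classic (exists d, C (l + d)%nat = (A (l + d) + B (l + d))%nat)) as [Hex|Hall].
    + right; left. split; auto.
      destruct (least_ex _ Hex) as [d0 [Hd0 Hmin]].
      destruct d0 as [|k]. { rewrite Nat.add_0_r in Hd0. lia. }
      assert (One : forall e, (e <= k)%nat -> C (l + e)%nat = (A (l + e) + B (l + e) + 1)%nat).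
      { intros e He. specialize (Hmin e ltac:(lia)). pose proof (Hb (l + e)%nat). lia. }
      exists k. split; [|split].
      * intros j Hj1 Hj2. destruct j as [|j']; [lia|].
        pose proof (One (j' - l)%nat ltac:(lia)) as O1.
        pose proof (One (S j' - l)%nat ltac:(lia)) as O2.
        replace (l + (j' - l))%nat with j' in O1 by lia.
        replace (l + (S j' - l))%nat with (S j') in O2 by lia.
        pose proof (HA j'). pose proof (HB j'). pose proof (HC j' ltac:(lia)).
        unfold pair_01_10. destruct (xb (S j')), (yb (S j')); simpl in *; auto; lia.
      * pose proof (One k (le_n _)) as O1.
        replace (l + S k)%nat with (S (l + k)) in Hd0 by lia.
        pose proof (HA (l + k)%nat). pose proof (HB (l + k)%nat). pose proof (HC (l + k)%nat ltac:(lia)).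
        replace (l + k + 1)%nat with (S (l + k)) by lia.
        unfold pair_11. destruct (xb (S (l + k))), (yb (S (l + k))); simpl in *; auto; lia.
      * intros j Hj. destruct (Z0 (l + S k)%nat ltac:(lia) Hd0 (j - (l + S k))%nat) as [_ Hz].
        specialize (Hz (j - (l + S k))%nat ltac:(lia)).
        replace (l + S k + (j - (l + S k)))%nat with j in Hz by lia. exact Hz.
    + right; right. split; auto.
      assert (One : forall e, C (l + e)%nat = (A (l + e) + B (l + e) + 1)%nat).
      { intros e. pose proof (Hb (l + e)%nat).
        assert (C (l + e)%nat <> (A (l + e) + B (l + e))%nat) by (intro; apply Hall; eauto). lia. }
      intros j Hj. destruct j as [|j']; [lia|].
      pose proof (One (j' - l)%nat) as O1.
      pose proof (One (S j' - l)%nat) as O2.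
      replace (l + (j' - l))%nat with j' in O1 by lia.
      replace (l + (S j' - l))%nat with (S j') in O2 by lia.
      pose proof (HA j'). pose proof (HB j'). pose proof (HC j' ltac:(lia)).
      unfold pair_01_10. destruct (xb (S j')), (yb (S j')); simpl in *; auto; lia.
Qed.

Lemma P_par b l : exists a, P b l = (2 * a + Nat.b2n (b l))%nat.
Proof. destruct l. exists 0%nat. simpl. lia. exists (P b l). reflexivity. Qed.

Theorem theorem4p2 (z x y : R) (zb xb yb : nat -> bool) (l : nat) :
  0 <= z <= 1 -> 0 <= x <= 1 -> 0 <= y <= 1 ->
  z = x + y ->
  concise_expansion zb z -> concise_expansion xb x -> concise_expansion yb y ->
  zb l = true -> (forall j : nat, (l < j)%nat -> zb j = false) ->
  (pattern1 xb yb l \/ pattern2 xb yb l \/ pattern3 xb yb l) /\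
  ~ (pattern1 xb yb l /\ pattern2 xb yb l) /\
  ~ (pattern1 xb yb l /\ pattern3 xb yb l) /\
  ~ (pattern2 xb yb l /\ pattern3 xb yb l).
Proof.
  intros _ _ _ Hz Cz Cx Cy Hzl Hzj.
  split; [|split; [|split]].
  - apply (comb (P xb) (P yb) (P zb)).
    + intros n. reflexivity.
    + intros n. reflexivity.
    + intros n Hn. change (P zb (S n)) with (2 * P zb n + Nat.b2n (zb (S n)))%nat.
      rewrite (Hzj (S n)) by lia. simpl Nat.b2n. lia.
    + intros n.
      pose proof (floor_lemma _ _ Cz n). pose proof (floor_lemma _ _ Cx n).
      pose proof (floor_lemma _ _ Cy n).
      assert (E : 2 ^ n * z = 2 ^ n * x + 2 ^ n * y) by (rewrite Hz; ring).
      split.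
      * assert (INR (P xb n + P yb n) < INR (P zb n + 1)).
        { rewrite !plus_INR. simpl INR. lra. }
        apply INR_lt in H2. lia.
      * assert (INR (P zb n) < INR (P xb n + P yb n + 2)).
        { rewrite !plus_INR. simpl INR. lra. }
        apply INR_lt in H2. lia.
    + apply P_par.
    + apply P_par.
    + destruct (P_par zb l) as [c Hc]. rewrite Hzl in Hc. exists c. exact Hc.
  - intros [[H1 _] [H2 _]]. unfold pair_01_10, pair_00_11 in *.
    destruct (xb l), (yb l); intuition congruence.
  - intros [[H1 _] [H2 _]]. unfold pair_01_10, pair_00_11 in *.
    destruct (xb l), (yb l); intuition congruence.
  - intros [[_ [k [_ [H1 _]]]] [_ H2]].
    specialize (H2 (l + k + 1)%nat ltac:(lia)). unfold pair_01_10, pair_11 in *.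
    destruct H1 as [E1 E2]. rewrite E1, E2 in H2. intuition congruence.
Qed.
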